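(* Let $\epsilon\in(0,1)$ and let $n$ be a positive integer, and set $c=Q^{-1}(\epsilon)/\sqrt{n}$, where $Q^{-1}$ is the inverse of the Gaussian $Q$-function. Define, for $\gamma\geq 0$, \[ f(\gamma)=\ln(1+\gamma)-c\sqrt{\frac{2\gamma}{1+\gamma}} . \] Then $f$ is increasing in $\gamma$ on the set $\gamma\geq\bar{\gamma}$, where $\bar{\gamma}=\frac{1}{2}\left(\sqrt{1+2c^{2}}-1\right)$.
   Context: $f(\gamma)$ is the finite-block-length (normal approximation) rate of a user with SINR $\gamma$, block length $n$ and maximum tolerable decoding error probability $\epsilon$, using channel dispersion $v=2\gamma/(1+\gamma)$, i.e. $f(\gamma)=\ln(1+\gamma)-Q^{-1}(\epsilon)\sqrt{v/n}$. *)

(* Defs.v *)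
From Stdlib Require Import Reals ClassicalEpsilon.
From Coquelicot Require Import Coquelicot.
Open Scope R_scope.

Definition Qfun (x : R) : R :=
  / sqrt (2 * PI) *
  RInt_gen (fun t => exp (- (t ^ 2) / 2)) (at_point x) (Rbar_locally p_infty).

(* Inverse Q-function: the (unique, Q being a decreasing bijection R -> (0,1))
   real x with Q x = eps. *)
Definition Qinv (eps : R) : R :=
  epsilon (inhabits 0) (fun x => Qfun x = eps).

Definition fbl (eps : R) (n : nat) (g : R) : R :=
  ln (1 + g) - (Qinv eps / sqrt (INR n)) * sqrt (2 * g / (1 + g)).

(* Main.v *)
Require Import Defs.
From Stdlib Require Import Reals Lra.
From Coquelicot Require Import Coquelicot.
Open Scope R_scope.

Lemma key_deriv c x : 0 < x ->
  is_derive (fun g => ln (1+g) - c * sqrt (2*g/(1+g))) x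
    (/(1+x) - c * (/(1+x)^2 / sqrt (2*x/(1+x)))).
Proof.
intros Hx.
assert (Hq : 0 < 2 * x / (1 + x)) by (apply Rdiv_lt_0_compat; lra).
assert (Hs : 0 < sqrt (2 * x / (1 + x))) by (apply sqrt_lt_R0; lra).
auto_derive.
- repeat split; try lra; unfold Rdiv in Hq; try lra; exact Hq.
- unfold Rdiv. field. split; lra.
Qed.

Lemma deriv_pos c x : 0 < x -> c ^ 2 < 2 * x * (1 + x) ->
  0 < /(1+x) - c * (/(1+x)^2 / sqrt (2*x/(1+x))).
Proof.
intros Hx Hc.
set (s := sqrt (2*x/(1+x))).
assert (Hq : 0 < 2 * x / (1 + x)) by (apply Rdiv_lt_0_compat; lra).
assert (Hs : 0 < s) by (apply sqrt_lt_R0; lra).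
assert (Hs2 : s * s = 2 * x / (1 + x)) by (apply sqrt_sqrt; lra).
assert (Hs3 : ((1+x)*s)*((1+x)*s) = 2 * x * (1 + x)).
{ replace (((1+x)*s)*((1+x)*s)) with ((1+x)*(1+x)*(s*s)) by ring.
  rewrite Hs2. field. lra. }
assert (Hcs : c < (1+x)*s).
{ destruct (Rle_lt_dec c 0) as [H|H]. nra. destruct (Rlt_le_dec c ((1+x)*s)) as [H1|H1]; [exact H1|]. assert (0 < (1+x)*s) by nra. assert ((1+x)*s*((1+x)*s) <= c*c) by (apply Rmult_le_compat; lra). simpl in Hc. lra. }
replace (/(1+x) - c * (/(1+x)^2 / s)) with (((1+x)*s - c) / ((1+x)^2 * s)).
2:{ field; lra. }
apply Rdiv_lt_0_compat. lra. apply Rmult_lt_0_compat; nra.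
Qed.

Theorem lemma1 (eps : R) (n : nat) :
  0 < eps < 1 -> (0 < n)%nat ->
  let c := Qinv eps / sqrt (INR n) in
  let gbar := (sqrt (1 + 2 * c ^ 2) - 1) / 2 in
  forall g1 g2 : R, 0 <= g1 -> gbar <= g1 -> g1 < g2 ->
    fbl eps n g1 < fbl eps n g2.
Proof.
intros _ _ c gbar g1 g2 H0 Hb H12.
unfold fbl. fold c.
set (F := fun g => ln (1+g) - c * sqrt (2*g/(1+g))).
change (F g1 < F g2).
destruct (Req_dec c 0) as [Hc0|Hc0].
{ unfold F. rewrite Hc0, !Rmult_0_l, !Rminus_0_r.
  apply ln_increasing; lra. }
assert (Hr : 1 < sqrt (1 + 2 * c ^ 2)).
{ assert (0 < c ^ 2) by (apply pow2_gt_0 ; exact Hc0).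
  rewrite <- sqrt_1 at 1. apply sqrt_lt_1; lra. }
assert (Hr2 : sqrt (1 + 2 * c ^ 2) * sqrt (1 + 2 * c ^ 2) = 1 + 2 * c ^ 2)
  by (apply sqrt_sqrt; nra).
assert (Hg1 : 0 < g1) by (unfold gbar in Hb; lra).
destruct (MVT_cor2 F (fun x => /(1+x) - c * (/(1+x)^2 / sqrt (2*x/(1+x)))) g1 g2 H12)
  as [xi [Heq Hxi]].
{ intros x Hx. apply is_derive_Reals. apply key_deriv. lra. }
assert (0 < /(1+xi) - c * (/(1+xi)^2 / sqrt (2*xi/(1+xi)))).
{ apply deriv_pos. lra. unfold gbar in Hb. nra. }
nra.
Qed.
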